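(* Let $A=\{a_0,a_1,\dots,a_{k-1}\}\subseteq\mathcal{C}_n$ with $a_0<a_1<\dots<a_{k-1}$, and let $\sigma=\sigma^{(n)}_k(A)$ be the corresponding $k$-simplex. Then (a) $\mathcal{DN}^{\,n-a_0-1}_0=\sigma\cap\mathcal{E}^{(a_0)}_{\mathcal{C}_n}$; (b) $\mathcal{DN}^{\,a_{k-1}}_{k-1}=\sigma\cap\mathcal{E}^{(a_{k-1})}_{\mathcal{C}_n}$.
   Context: $\mathcal{C}_n=\{0,1,\dots,n-1\}$ is the chain with its usual order; $\widehat{\mathcal{E}}_{\mathcal{C}_n}$ is the set of all order-preserving maps $\mathcal{C}_n\to\mathcal{C}_n$ (not required to fix $0$), a semiring under pointwise maximum and composition. The $k$-simplex $\sigma^{(n)}_k(A)$ is the set of all $\alpha\in\widehat{\mathcal{E}}_{\mathcal{C}_n}$ with $\mathrm{im}(\alpha)\subseteq A$. For $x\in\mathcal{C}_n$, $\overline{x}$ is the constant map with value $x$, and $\mathcal{E}^{(x)}_{\mathcal{C}_n}=\{\alpha\in\widehat{\mathcal{E}}_{\mathcal{C}_n}:\alpha(x)=x\}$. For $m\in\{0,\dots,k-1\}$ and $s\in\{0,\dots,n-1\}$, the $s$-th layer with respect to $\overline{a_m}$ is $\mathcal{L}^{s}_{a_m}=\{\alpha\in\sigma:\ |\{i\in\mathcal{C}_n:\alpha(i)=a_m\}|=s\}$. For an integer $t$ with $0\le t\le n$, the discrete neighborhood is $\mathcal{DN}^{\,t}_m=\{\overline{a_m}\}\cup\bigcup_{\ell=n-t}^{n-1}\mathcal{L}^{\ell}_{a_m}$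 (the union being empty when $t=0$). *)

(* Defs.v *)
From mathcomp Require Import all_boot all_order.
Set Implicit Arguments. Unset Strict Implicit. Unset Printing Implicit Defensive.

(* The chain C_n = {0,...,n-1} is 'I_n with its usual order. *)

Definition ope (n : nat) : {set {ffun 'I_n -> 'I_n}} :=
  [set f : {ffun 'I_n -> 'I_n} | [forall x : 'I_n, forall y : 'I_n, (x <= y)%N ==> (f x <= f y)%N]].

Definition simplex (n : nat) (A : {set 'I_n}) : {set {ffun 'I_n -> 'I_n}} :=
  [set f : {ffun 'I_n -> 'I_n} in ope n | [forall i : 'I_n, f i \in A]].

Definition constmap (n : nat) (x : 'I_n) : {ffun 'I_n -> 'I_n} := [ffun _ => x].

Definition Efix (n : nat) (x : 'I_n) : {set {ffun 'I_n -> 'I_n}} :=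
  [set f : {ffun 'I_n -> 'I_n} in ope n | f x == x].

Definition layer (n : nat) (sigma : {set {ffun 'I_n -> 'I_n}}) (b : 'I_n) (s : nat)
  : {set {ffun 'I_n -> 'I_n}} :=
  [set f : {ffun 'I_n -> 'I_n} in sigma | #|[set i : 'I_n | f i == b]| == s].

Definition DN (n : nat) (sigma : {set {ffun 'I_n -> 'I_n}}) (b : 'I_n) (t : nat)
  : {set {ffun 'I_n -> 'I_n}} :=
  constmap b |: \bigcup_(n - t <= l < n) layer sigma b l.

(* Main.v *)
Require Import Defs.
From mathcomp Require Import all_boot all_order.
From mathcomp Require Import zify.

Lemma mem_bigcup_nat (T : finType) (x : T) lo hi (F : nat -> {set T}) :
  (x \in \bigcup_(lo <= l < hi) F l) = has (fun l => x \in F l) (index_iota lo hi).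
Proof.
rewrite (big_morph (fun A : {set T} => x \in A) (fun A B => in_setU x A B) (in_set0 x)).
by rewrite big_has.
Qed.
Lemma card_le (n b : nat) (S : {set 'I_n}) : (forall i, i \in S -> i < b) -> #|S| <= b.
Proof.
move=> H; rewrite cardE -(size_map val) -[b](size_iota 0).
apply: uniq_leq_size; first by rewrite map_inj_uniq ?enum_uniq //; apply: val_inj.
move=> x /mapP [y]; rewrite mem_enum => /H yb ->; by rewrite mem_iota.
Qed.
Lemma card_ge (n c : nat) (S : {set 'I_n}) : c <= n -> (forall i : 'I_n, i < c -> i \in S) -> c <= #|S|.
Proof.
move=> cn H; rewrite cardE -(size_map val) -[c](size_iota 0).
apply: uniq_leq_size; first exact: iota_uniq.
move=> x; rewrite mem_iota add0n /= => xc.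
have xn : x < n by apply: leq_trans xc cn.
apply/mapP; exists (Ordinal xn) => //; rewrite mem_enum; exact: H.
Qed.

Lemma ope_mono n (f : {ffun 'I_n -> 'I_n}) : f \in ope n ->
  forall x y : 'I_n, x <= y -> f x <= f y.
Proof.
rewrite inE => /forallP H x y; move: (H x) => /forallP /(_ y) /implyP; exact.
Qed.

Arguments ope_mono {n f} _ {x y}.

Lemma parta n (b : 'I_n) (sig : {set {ffun 'I_n -> 'I_n}}) :
 (forall f, f \in sig -> f \in ope n /\ forall i, b <= f i) -> constmap b \in sig ->
 DN sig b (n - b - 1) = sig :&: Efix b.
Proof.
move=> Hs Hc; apply/setP => f.
rewrite /DN in_setU1 mem_bigcup_nat in_setI /Efix in_set.
have bn := ltn_ord b.
apply/idP/idP.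
- case/orP => [/eqP -> | /hasP [l]].
    by rewrite Hc (proj1 (Hs _ Hc)) /constmap ffunE eqxx.
  rewrite mem_index_iota inE => /andP [l1 l2] /andP [fs /eqP cardS].
  rewrite fs; have [fo fge] := Hs f fs; rewrite fo /=.
  apply/negPn/negP => fb.
  have lt : b < f b by rewrite ltn_neqAle eq_sym fb fge.
  have : #|[set i | f i == b]| <= b.
    apply: card_le => i; rewrite inE => /eqP fi.
    rewrite ltnNge; apply/negP => bi.
    have := ope_mono fo bi; rewrite fi; move=> h; by rewrite leqNgt lt in h.
  rewrite cardS => h; lia.
- move=> /andP [fs /andP [fo /eqP fb]].
  have [_ fge] := Hs f fs.
  have cC := cardsC [set i | f i == b]; rewrite card_ord in cC.
  case cn: (#|[set i | f i == b]| == n).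
    apply/orP; left; apply/eqP/ffunP => i; rewrite ffunE.
    have /eqP/cards0_eq C0 : #|~: [set i | f i == b]| == 0 by move/eqP: cn; lia.
    have : i \notin ~: [set i | f i == b] by rewrite C0 inE.
    by rewrite !inE negbK => /eqP.
  apply/orP; right; apply/hasP; exists #|[set i | f i == b]|; last by rewrite inE fs eqxx.
  have : b.+1 <= #|[set i | f i == b]|.
    apply: card_ge => // i ib; rewrite inE.
    have := ope_mono fo (ib : i <= b); rewrite fb => h.
    have := fge i => h'; by apply/eqP; apply: val_inj; apply/anti_leq; rewrite h h'.
  rewrite mem_index_iota; move/eqP: cn; lia.
Qed.

Lemma partb n (b : 'I_n) (sig : {set {ffun 'I_n -> 'I_n}}) :
 (forall f, f \in sig -> f \in ope n /\ forall i, f i <= b) -> constmap b \in sig ->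
 DN sig b b = sig :&: Efix b.
Proof.
move=> Hs Hc; apply/setP => f.
rewrite /DN in_setU1 mem_bigcup_nat in_setI /Efix in_set.
have bn := ltn_ord b.
apply/idP/idP.
- case/orP => [/eqP -> | /hasP [l]].
    by rewrite Hc (proj1 (Hs _ Hc)) /constmap ffunE eqxx.
  rewrite mem_index_iota inE => /andP [l1 l2] /andP [fs /eqP cardS].
  rewrite fs; have [fo fle] := Hs f fs; rewrite fo /=.
  apply/negPn/negP => fb.
  have lt : f b < b by rewrite ltn_neqAle fb fle.
  have cC := cardsC [set i | f i == b]; rewrite card_ord in cC.
  have : b.+1 <= #|~: [set i | f i == b]|.
    apply: card_ge => // i ib; rewrite !inE.
    have := ope_mono fo (ib : i <= b) => h.
    apply/eqP => e; by rewrite e leqNgt lt in h.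
  rewrite -cardS in l1; move=> h; move: (leq_add l1 h); rewrite cC; lia.
- move=> /andP [fs /andP [fo /eqP fb]].
  have [_ fle] := Hs f fs.
  have cC := cardsC [set i | f i == b]; rewrite card_ord in cC.
  case cn: (#|[set i | f i == b]| == n).
    apply/orP; left; apply/eqP/ffunP => i; rewrite ffunE.
    have /eqP/cards0_eq C0 : #|~: [set i | f i == b]| == 0 by move/eqP: cn; lia.
    have : i \notin ~: [set i | f i == b] by rewrite C0 inE.
    by rewrite !inE negbK => /eqP.
  apply/orP; right; apply/hasP; exists #|[set i | f i == b]|; last by rewrite inE fs eqxx.
  have : #|~: [set i | f i == b]| <= b.
    apply: card_le => i; rewrite !inE => ni.
    rewrite ltnNge; apply/negP => bi.
    have := ope_mono fo bi; rewrite fb => h.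
    have := fle i => h'; move/negP: ni; apply; by apply/eqP; apply: val_inj; apply/anti_leq; rewrite h h'.
  rewrite mem_index_iota; move/eqP: cn; lia.
Qed.

Theorem theorem5 (n k' : nat) (a : 'I_k'.+1 -> 'I_n)
  (a_incr : forall i j : 'I_k'.+1, (i < j)%N -> (a i < a j)%N) :
  let A := [set a i | i : 'I_k'.+1] in
  let sigma := simplex A in
  DN sigma (a ord0) (n - a ord0 - 1) = sigma :&: Efix (a ord0) /\
  DN sigma (a ord_max) (a ord_max) = sigma :&: Efix (a ord_max).
Proof.
move=> A sigma.
have a0 : forall j, a ord0 <= a j.
  move=> j; case: (posnP j) => [j0 | jp].
    by have -> : j = ord0 by apply: val_inj.
  exact: ltnW (a_incr ord0 j jp).
have am : forall j, a j <= a ord_max.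
  move=> j; have : j <= k' by rewrite -ltnS.
  rewrite leq_eqVlt => /orP [/eqP jm | jm].
    by have -> : j = ord_max by apply: val_inj.
  exact: ltnW (a_incr j ord_max jm).
have cs : forall j, constmap (a j) \in sigma.
  move=> j; rewrite !inE; apply/andP; split.
    by apply/forallP => x; apply/forallP => y; rewrite !ffunE leqnn implybT.
  by apply/forallP => i; rewrite ffunE; apply: imset_f.
split.
- apply: parta; last exact: cs.
  move=> f; rewrite inE => /andP [fo /forallP fA]; split => // i.
  by have /imsetP [j _ ->] := fA i.
- apply: partb; last exact: cs.
  move=> f; rewrite inE => /andP [fo /forallP fA]; split => // i.
  by have /imsetP [j _ ->] := fA i.
Qed.
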